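(* Let $d\ge 1$, $k\ge 1$, $m\ge 1$ and $n>k$ be integers. Let $C\subseteq\mathbb{R}^d$ be a set containing a line segment between two distinct points. Let $f:(\mathbb{R}^d)^k\to\mathbb{R}^m$ be a continuous piecewise linear (CPwL) function, and let $F:(\mathbb{R}^d)^n\to\mathbb{R}^m$ be its $k$-ary Janossy pooling, \[F(\mathbf{x}_1,\dots,\mathbf{x}_n)=\frac{1}{(n-k)!}\sum_{\pi\in S_n} f\big(\mathbf{x}_{\pi(1)},\dots,\mathbf{x}_{\pi(k)}\big).\] Then $F$, viewed as a function on the multiset space $\mathcal{M}_n(C)$, is not injective; that is, there exist two distinct multisets $\{\mathbf{w}_1,\dots,\mathbf{w}_n\}\neq\{\mathbf{w}'_1,\dots,\mathbf{w}'_n\}$ of $n$ elements of $C$ with $F(\mathbf{w}_1,\dots,\mathbf{w}_n)=F(\mathbf{w}'_1,\dots,\mathbf{w}'_n)$.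
   Context: A (closed, convex) polytope in $\mathbb{R}^N$ is a set of the form $\{\mathbf{x}\in\mathbb{R}^N : \mathbf{a}_j\cdot\mathbf{x}+b_j\ge 0,\ j=1,\dots,J\}$ for finitely many $\mathbf{a}_j\in\mathbb{R}^N$, $b_j\in\mathbb{R}$ (not necessarily bounded). A partition of $\mathbb{R}^N$ is a finite collection of polytopes with nonempty interior whose union is $\mathbb{R}^N$ and whose interiors are pairwise disjoint. A function $f:\mathbb{R}^N\to\mathbb{R}^m$ is continuous piecewise linear (CPwL) if it is continuous and there is a partition of $\mathbb{R}^N$ such that the restriction of $f$ to each polytope of the partition is affine. Here $(\mathbb{R}^d)^k$ is identified with $\mathbb{R}^{dk}$. $S_n$ is the symmetric group on $\{1,\dots,n\}$. $\mathcal{M}_n(C)$ denotes the set of multisets of cardinality $n$ (unordered, repetitions allowed) with elements in $C$; a permutation-invariant function on $C^n$ is identified with a function on $\mathcal{M}_n(C)$, and $F$ as defined is permutation invariant. *)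

(* Defs.v *)
From HB Require Import structures.
From mathcomp Require Import all_boot all_order all_algebra all_fingroup.
From mathcomp Require Import all_classical all_reals all_analysis.
Set Implicit Arguments. Unset Strict Implicit. Unset Printing Implicit Defensive.
Import Order.TTheory GRing.Theory Num.Theory.
Import numFieldNormedType.Exports.
Local Open Scope classical_set_scope.
Local Open Scope ring_scope.

Definition polytope (R : realType) (N : nat) (P : set 'rV[R]_N) : Prop :=
  exists (J : nat) (a : 'I_J -> 'rV[R]_N) (b : 'I_J -> R),
    P = [set x | forall j : 'I_J, 0 <= \sum_(i < N) a j 0 i * x 0 i + b j].

Definition is_partition (R : realType) (N : nat) (p : nat)
    (P : 'I_p -> set 'rV[R]_N) : Prop :=
  [/\ forall i, polytope (P i),
      forall i, interior (P i) !=set0,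
      \bigcup_(i in [set: 'I_p]) P i = [set: 'rV[R]_N] &
      forall i j, i != j -> interior (P i) `&` interior (P j) = set0].

Definition affine_on (R : realType) (N m : nat) (f : 'rV[R]_N -> 'rV[R]_m)
    (S : set 'rV[R]_N) : Prop :=
  exists (A : 'M[R]_(N, m)) (c : 'rV[R]_m), forall x, S x -> f x = x *m A + c.

Definition CPwL (R : realType) (N m : nat) (f : 'rV[R]_N -> 'rV[R]_m) : Prop :=
  continuous f /\
  exists (p : nat) (P : 'I_p -> set 'rV[R]_N),
    is_partition P /\ forall i, affine_on f (P i).

(* An n-tuple (x_1,..,x_n) of points of R^d is the
   matrix X : 'M_(n,d) whose i-th row is x_i; a k-tuple of points of R^d is
   identified with a vector of R^(k*d) via mxvec (row-major concatenation). *)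
Definition janossy (R : realType) (d k n m : nat) (hkn : (k <= n)%N)
    (f : 'rV[R]_(k * d) -> 'rV[R]_m) (X : 'M[R]_(n, d)) : 'rV[R]_m :=
  ((n - k)`!%:R)^-1 *:
    \sum_(s : 'S_n) f (mxvec (\matrix_(i < k, j < d) X (s (widen_ord hkn i)) j)).

Definition rows_seq (R : realType) (n d : nat) (X : 'M[R]_(n, d)) : seq 'rV[R]_d :=
  [seq row i X | i <- enum 'I_n].

(* Main.v *)
Require Import Defs.
From HB Require Import structures.
From mathcomp Require Import all_boot all_order all_algebra all_fingroup.
From mathcomp Require Import all_classical all_reals all_analysis.
From mathcomp Require Import ring lra.
Import Order.TTheory GRing.Theory Num.Theory.
Import numFieldNormedType.Exports.
Local Open Scope classical_set_scope.
Local Open Scope ring_scope.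

Set Implicit Arguments. Unset Strict Implicit. Unset Printing Implicit Defensive.

Definition hier {R : realFieldType} (n : nat) (K : R) (x : nat -> R) : Prop :=
  0 < x 0%N /\ (forall l, (l.+1 < n)%N -> K * x l < x l.+1) /\ K * x n.-1 < 1.

Lemma hier_pos (R : realFieldType) (n : nat) (K : R) (x : nat -> R) : 1 <= K -> hier n K x ->
  forall l, (l < n)%N -> 0 < x l.
Proof.
move=> K1 [x0 [xs _]]; elim=> // l IH ln.
have := xs l ln; have := IH (ltnW ln).
move=> h1 h2; apply: lt_trans h2; rewrite mulr_gt0 //; lra.
Qed.

Lemma hier_chain (R : realFieldType) (n : nat) (K : R) (x : nat -> R) : 1 <= K -> hier n K x ->
  forall a b, (a < b)%N -> (b < n)%N -> K * x a < x b.
Proof.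
move=> K1 H a; elim=> // b IH ab bn.
have [_ [xs _]] := H.
have xb : 0 < x b by apply: (hier_pos K1 H); exact: ltnW.
case: (ltngtP a b) => [lab| |eab].
- have h1 := IH lab (ltnW bn); have h2 := xs b bn.
  have : x b <= K * x b by rewrite ler_peMl //; lra.
  lra.
- by move=> ba; move: ab; rewrite ltnS leqNgt ba.
- by rewrite eab; exact: xs.
Qed.

Lemma hier_top (R : realFieldType) (n : nat) (K : R) (x : nat -> R) : 1 <= K -> hier n K x ->
  forall l, (l < n)%N -> x l <= x n.-1.
Proof.
move=> K1 H l ln.
have xl : 0 < x l by apply: (hier_pos K1 H).
case: (ltngtP l n.-1) => [h| h| ->] //.
- have n0 : (0 < n)%N by apply: leq_ltn_trans ln.
  have := hier_chain K1 H h; rewrite ltn_predL => /(_ n0) h2.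
  have : x l <= K * x l by rewrite ler_peMl //; lra.
  lra.
- by move: ln; clear H; case: n h => //= n' h; rewrite ltnS leqNgt h.
Qed.
Definition Kb {R : realFieldType} {k : nat} (β : R) (c : 'I_k -> R) : R :=
  1 + (\sum_i `|c i|) * (`|β|^-1 + \sum_i `|c i|^-1).

Lemma Kb_gt (R : realFieldType) (k : nat) (β : R) (c : 'I_k -> R) (u : R) :
  u != 0 -> (u = β \/ exists i, u = c i) -> \sum_i `|c i| < Kb β c * `|u|.
Proof.
move=> u0 hu.
have un : 0 < `|u| by rewrite normr_gt0.
have S0 : 0 <= \sum_i `|c i| by apply: sumr_ge0 => i _.
have hinv : `|u|^-1 <= `|β|^-1 + \sum_i `|c i|^-1.
  case: hu => [->|[i ->]].
  - by rewrite lerDl; apply: sumr_ge0 => j _; rewrite invr_ge0.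
  - apply: le_trans (_ : \sum_i `|c i|^-1 <= _); last first.
      by rewrite lerDr invr_ge0.
    by rewrite (bigD1 i) //= lerDl; apply: sumr_ge0 => j _; rewrite invr_ge0.
rewrite /Kb mulrDl mul1r.
have : (\sum_i `|c i|) * `|u|^-1 * `|u| <= 
   (\sum_i `|c i|) * (`|β|^-1 + \sum_i `|c i|^-1) * `|u|.
  by rewrite ler_wpM2r // ?ler_wpM2l // ltW.
rewrite -mulrA mulVf ?mulr1; last by rewrite normr_eq0.
lra.
Qed.

Lemma sum_bound (R : realFieldType) (n k : nat) (K : R) (x : nat -> R)
  (c : 'I_k -> R) (ι : 'I_k -> 'I_n) : 1 <= K -> hier n K x ->
  `|\sum_i c i * x (ι i)| <= (\sum_i `|c i|) * x n.-1.
Proof.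
move=> K1 H.
apply: le_trans (ler_norm_sum _ _ _) _.
rewrite mulr_suml; apply: ler_sum => i _.
rewrite normrM (@ger0_norm _ (x _)); last by apply/ltW/(hier_pos K1 H).
by rewrite ler_wpM2l // (hier_top K1 H).
Qed.

Lemma dom_beta (R : realFieldType) (n k : nat) (K : R) (x : nat -> R)
  (β : R) (c : 'I_k -> R) (ι : 'I_k -> 'I_n) : 1 <= K -> Kb β c <= K ->
  hier n K x -> β != 0 -> `|\sum_i c i * x (ι i)| < `|β|.
Proof.
move=> K1 KK H b0.
have h1 := sum_bound c ι K1 H.
have h2 := Kb_gt (c:=c) b0 (or_introl erefl).
have [_ [_ htop]] := H.
have S0 : 0 <= \sum_i `|c i| by apply: sumr_ge0 => i _.
have bn : 0 < `|β| by rewrite normr_gt0.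
have h3 : Kb β c * `|β| <= K * `|β| by rewrite ler_wpM2r // ltW.
set S := \sum_i `|c i| in h1 h2 S0.
set T := `|\sum_i c i * x (ι i)| in h1 *.
have h4 : K * T <= K * (S * x n.-1) by rewrite ler_wpM2l //; lra.
have h5 : K * (S * x n.-1) <= S.
  by rewrite mulrCA -[X in _ <= X]mulr1 ler_wpM2l // ltW.
have : K * T < K * `|β| by lra.
by rewrite ltr_pM2l //; lra.
Qed.
Lemma dom_top (R : realFieldType) (n k : nat) (K : R) (x : nat -> R)
  (β : R) (c : 'I_k -> R) (ι : 'I_k -> 'I_n) (i0 : 'I_k) : 1 <= K -> Kb β c <= K ->
  hier n K x -> c i0 != 0 ->
  (forall i, i != i0 -> c i != 0 -> (ι i < ι i0)%N) ->
  `|\sum_i c i * x (ι i) - c i0 * x (ι i0)| < `|c i0| * x (ι i0).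
Proof.
move=> K1 KK H ci0 hlt.
rewrite (bigD1 i0) //= addrAC subrr add0r.
have xs : 0 < x (ι i0) by apply: (hier_pos K1 H).
have h1 : `|\sum_(i | i != i0) c i * x (ι i)| <= \sum_(i | i != i0) `|c i| * x (ι i).
  apply: le_trans (ler_norm_sum _ _ _) _; apply: ler_sum => i _.
  by rewrite normrM (@ger0_norm _ (x _)) //; apply/ltW/(hier_pos K1 H).
have h2 : K * \sum_(i | i != i0) `|c i| * x (ι i) <= (\sum_i `|c i|) * x (ι i0).
  rewrite mulr_sumr mulr_suml.
  apply: le_trans (_ : \sum_(i | i != i0) `|c i| * x (ι i0) <= _).
    apply: ler_sum => i ii0.
    have [->|cin] := eqVneq (c i) 0; first by rewrite normr0 !mul0r mulr0.
    rewrite mulrCA ler_wpM2l // ltW //.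
    exact: (hier_chain K1 H (hlt i ii0 cin)).
  rewrite [X in _ <= X](bigD1 i0) //= lerDr mulr_ge0 //; exact: ltW.
have h3 := Kb_gt (c:=c) (β:=β) ci0 (or_intror (ex_intro _ i0 erefl)).
have h4 : (\sum_i `|c i|) * x (ι i0) < K * (`|c i0| * x (ι i0)).
  rewrite mulrA ltr_pM2r //; apply: lt_le_trans h3 _.
  by rewrite ler_wpM2r.
have : K * `|\sum_(i | i != i0) c i * x (ι i)| < K * (`|c i0| * x (ι i0)).
  apply: le_lt_trans h4; apply: le_trans h2; rewrite ler_wpM2l //; lra.
rewrite ltr_pM2l //; lra.
Qed.
Lemma sign_of1 (R : realFieldType) (V a y : R) : 0 < y -> `|V - a * y| < `|a| * y ->
  (0 <= V) = (0 < a).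
Proof.
move=> y0; rewrite ltr_norml => /andP [h1 h2].
apply/idP/idP => h.
- rewrite ltNge; apply/negP => a0.
  rewrite ler0_norm // in h2; lra.
- rewrite gtr0_norm // in h1; lra.
Qed.

Lemma sign_of2 (R : realFieldType) (s b : R) : `|s| < `|b| ->
  (0 <= b + s) = (0 < b).
Proof.
rewrite ltr_norml => /andP [h1 h2].
apply/idP/idP => h.
- rewrite ltNge; apply/negP => a0.
  rewrite ler0_norm // in h2; lra.
- rewrite gtr0_norm // in h1; lra.
Qed.

Lemma sign_equiv (R : realFieldType) (n k : nat) (K : R) (x x' : nat -> R)
  (β : R) (c : 'I_k -> R) (ι ι' : 'I_k -> 'I_n) : 1 <= K -> Kb β c <= K ->
  hier n K x -> hier n K x' -> injective ι ->
  (forall i j, (ι i < ι j)%N = (ι' i < ι' j)%N) ->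
  (0 <= β + \sum_i c i * x (ι i)) = (0 <= β + \sum_i c i * x' (ι' i)).
Proof.
move=> K1 KK H H' iinj key.
have [->|b0] := eqVneq β 0; last first.
  by rewrite (sign_of2 (dom_beta ι K1 KK H b0)) (sign_of2 (dom_beta ι' K1 KK H' b0)).
rewrite !add0r.
case: (pickP (fun i => c i != 0)) => [i1 ci1 | none]; last first.
  by rewrite !big1 // => i _; move/negbFE/eqP: (none i) => ->; rewrite mul0r.
have [i0 ci0 hmax] := @arg_maxnP _ i1 (fun i => c i != 0) (fun i => val (ι i)) ci1.
have hlt : forall i, i != i0 -> c i != 0 -> (ι i < ι i0)%N.
  move=> i ii0 ci; have /= hle := hmax i ci; rewrite ltn_neqAle hle andbT.
  apply/negP => /eqP /val_inj /iinj /eqP; by rewrite (negbTE ii0).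
have hlt' : forall i, i != i0 -> c i != 0 -> (ι' i < ι' i0)%N.
  by move=> i ii0 ci; rewrite -key hlt.
rewrite (sign_of1 _ (dom_top K1 KK H ci0 hlt)); last by apply: (hier_pos K1 H).
by rewrite (sign_of1 _ (dom_top K1 KK H' ci0 hlt')) //; apply: (hier_pos K1 H').
Qed.
Definition Ypt {R : ringType} {k d : nat} (a0 b0 : 'rV[R]_d) (τ : 'I_k -> R) : 'rV[R]_(k * d) :=
  mxvec (\matrix_(i < k, j < d) ((1 - τ i) * a0 0 j + τ i * b0 0 j)).
Definition Ebas {R : ringType} {k d : nat} (a0 b0 : 'rV[R]_d) (i : 'I_k) : 'rV[R]_(k * d) :=
  mxvec (\matrix_(i' < k, j < d) ((i' == i)%:R * (b0 0 j - a0 0 j))).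

Lemma Yaff (R : comRingType) (k d : nat) (a0 b0 : 'rV[R]_d) (τ : 'I_k -> R) :
  Ypt a0 b0 τ = Ypt a0 b0 (fun _ => 0) + \sum_i τ i *: Ebas a0 b0 i.
Proof.
apply/rowP => kk; case/mxvec_indexP: kk => i j.
rewrite mxE summxE !mxvecE !mxE.
under eq_bigr do rewrite mxE mxvecE mxE.
rewrite (bigD1 i) //= big1 ?eqxx; last first.
  by move=> i' /negbTE; rewrite eq_sym => ->; rewrite mul0r mulr0.
rewrite subr0 mul1r mul0r addr0 mul1r; ring.
Qed.

Lemma pull (R : comRingType) (k d : nat) (a0 b0 : 'rV[R]_d) (α : 'rV[R]_(k * d)) (b : R) :
  exists (β : R) (c : 'I_k -> R), forall τ,
    \sum_l α 0 l * Ypt a0 b0 τ 0 l + b = β + \sum_i c i * τ i.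
Proof.
exists (\sum_l α 0 l * Ypt a0 b0 (fun _ => 0) 0 l + b).
exists (fun i => \sum_l α 0 l * Ebas a0 b0 i 0 l) => τ.
rewrite addrAC; congr (_ + _).
under eq_bigr do rewrite Yaff mxE mulrDr summxE.
rewrite big_split /=; congr (_ + _).
under eq_bigr do rewrite mulr_sumr.
rewrite exchange_big /=; apply: eq_bigr => i _.
rewrite mulr_suml; apply: eq_bigr => l _; rewrite mxE; ring.
Qed.
Definition keyeq {n k : nat} (ι ι' : 'I_k -> 'I_n) :=
  forall i j, (ι i < ι j)%N = (ι' i < ι' j)%N.

Lemma Kb_ge1 (R : realFieldType) (k : nat) (β : R) (c : 'I_k -> R) : 1 <= Kb β c.
Proof.
rewrite /Kb lerDl mulr_ge0 //; first by apply: sumr_ge0.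
by rewrite addr_ge0 ?invr_ge0 //; apply: sumr_ge0 => i _; rewrite invr_ge0.
Qed.

Lemma poly_inv (R : realType) (n k d : nat) (a0 b0 : 'rV[R]_d) (P : set 'rV[R]_(k * d)) :
  polytope P -> exists K0 : R, forall K, 1 <= K -> K0 <= K ->
  forall (x x' : nat -> R) (ι ι' : 'I_k -> 'I_n), hier n K x -> hier n K x' ->
  injective ι -> keyeq ι ι' ->
  (P (Ypt a0 b0 (fun i => x (ι i))) <-> P (Ypt a0 b0 (fun i => x' (ι' i)))).
Proof.
case=> J [a [b ->]].
have hex : forall j : 'I_J, exists p : R * ('I_k -> R), forall τ,
    \sum_l a j 0 l * Ypt a0 b0 τ 0 l + b j = p.1 + \sum_i p.2 i * τ i.
  move=> j; have [β [c h]] := pull a0 b0 (a j) (b j); by exists (β, c).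
have [f hf] := choice hex.
exists (\sum_j Kb (f j).1 (f j).2) => K K1 KK x x' ι ι' H H' iinj key.
have Kj : forall j, Kb (f j).1 (f j).2 <= K.
  move=> j; apply: le_trans KK; rewrite (bigD1 j) //= lerDl.
  by apply: sumr_ge0 => i _; apply: le_trans (Kb_ge1 _ _).
rewrite /=; split => h j; move: (h j); rewrite !hf.
- by rewrite (sign_equiv K1 (Kj j) H H' iinj key).
- by rewrite (sign_equiv K1 (Kj j) H H' iinj key).
Qed.
Definition incr {n k : nat} (ι : 'I_k -> 'I_n) : bool :=
  [forall i : 'I_k, forall j : 'I_k, (i < j)%N ==> (ι i < ι j)%N].

Lemma incrP (n k : nat) (ι : 'I_k -> 'I_n) : incr ι -> forall a b, (ι a < ι b)%N = (a < b)%N.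
Proof.
move=> /forallP H a b.
have H2 : forall a b : 'I_k, (a < b)%N -> (ι a < ι b)%N.
  by move=> a' b' ab; move/forallP: (H a') => /(_ b') /implyP; apply.
case: (ltngtP a b) => [ab|ba|/val_inj ->]; first exact: H2.
- by apply/negbTE; rewrite -leqNgt ltnW // H2.
- by rewrite ltnn.
Qed.

Definition rank {n k : nat} (ι : 'I_k -> 'I_n) (i : 'I_k) : nat :=
  #|[set i' | (ι i' < ι i)%N]%SET|.

Lemma rank_lt (n k : nat) (ι : 'I_k -> 'I_n) i : (rank ι i < k)%N.
Proof.
have : (rank ι i <= #|[set~ i]%SET|)%N.
  rewrite /rank.
  apply: subset_leq_card; apply/fintype.subsetP => j; rewrite !inE.
  by move=> h; apply/eqP => e; rewrite e ltnn in h.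
rewrite cardsC1 card_ord => /leq_ltn_trans; apply.
by rewrite prednK // (leq_ltn_trans _ (ltn_ord i)).
Qed.

Lemma rank_mono (n k : nat) (ι : 'I_k -> 'I_n) a b : (ι a < ι b)%N -> (rank ι a < rank ι b)%N.
Proof.
move=> ab; apply: proper_card; apply/properP; split.
  by apply/fintype.subsetP => j; rewrite !inE => /ltn_trans; apply.
by exists a; rewrite !inE ?ab // ltnn.
Qed.

Lemma card_lt_ord (k r : nat) : (r <= k)%N -> #|[set r' : 'I_k | (r' < r)%N]%SET| = r.
Proof.
move=> rk; rewrite -sum1_card.
rewrite (eq_bigl (fun r' : 'I_k => true && (r' < r)%N)); last by move=> j; rewrite inE.
by rewrite -(big_ord_widen_cond k xpredT (fun _ => 1%N) rk) sum1_card card_ord.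
Qed.

Lemma rank_incr (n k : nat) (ι : 'I_k -> 'I_n) (π : 'S_k) r :
  incr (fun i => ι (π i)) -> rank ι (π r) = r.
Proof.
move=> hi; rewrite /rank -(card_preimset _ (@perm_inj _ π)).
rewrite -[RHS](card_lt_ord (ltnW (ltn_ord r))).
by apply: eq_card => j; rewrite !inE (incrP hi).
Qed.

Lemma sort_exists (n k : nat) (ι : 'I_k -> 'I_n) : injective ι ->
  exists π : 'S_k, incr (fun i => ι (π i)).
Proof.
move=> iinj.
pose rk (i : 'I_k) : 'I_k := Ordinal (rank_lt ι i).
have rkE : forall i, val (rk i) = rank ι i by [].
have rk_inj : injective rk.
  move=> a b /(congr1 val); rewrite !rkE => e; apply: iinj; apply: val_inj.
  case: (ltngtP (ι a) (ι b)) => // h.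
  - by have := rank_mono h; rewrite e ltnn.
  - by have := rank_mono h; rewrite e ltnn.
exists (perm rk_inj)^-1%g; apply/forallP => r; apply/forallP => r'; apply/implyP => rr'.
set a := (perm rk_inj)^-1%g r; set b := (perm rk_inj)^-1%g r'.
have ra : rank ι a = r by rewrite -rkE -(permE rk_inj) permKV.
have rb : rank ι b = r' by rewrite -rkE -(permE rk_inj) permKV.
case: (ltngtP (ι a) (ι b)) => // h.
- by have := rank_mono h; rewrite ra rb ltnNge ltnW.
- have : a = b by apply: iinj; apply: val_inj.
  by move/(congr1 (perm rk_inj)); rewrite !permKV => /(congr1 val) /= e; rewrite e ltnn in rr'.
Qed.

Lemma rank_inj (n k : nat) (ι : 'I_k -> 'I_n) a b : injective ι ->
  rank ι a = rank ι b -> a = b.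
Proof.
move=> iinj e; apply: iinj; apply: val_inj.
case: (ltngtP (ι a) (ι b)) => // h.
- by have := rank_mono h; rewrite e ltnn.
- by have := rank_mono h; rewrite e ltnn.
Qed.

Lemma sort_unique (n k : nat) (ι : 'I_k -> 'I_n) (π π' : 'S_k) : injective ι ->
  incr (fun i => ι (π i)) -> incr (fun i => ι (π' i)) -> π = π'.
Proof.
move=> iinj h1 h2; apply/permP => r.
have e1 := rank_incr r h1; have e2 := rank_incr r h2.
apply: (rank_inj iinj); by rewrite e1 e2.
Qed.
Definition liftf {n k : nat} (hkn : (k <= n)%N) (π : 'S_k) (l : 'I_n) : 'I_n :=
  if @insub _ (fun m => (m < k)%N) 'I_k (val l) is Some i then widen_ord hkn (π i) else l.

Lemma liftf_inj (n k : nat) (hkn : (k <= n)%N) (π : 'S_k) : injective (liftf hkn π).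
Proof.
move=> l l'; rewrite /liftf.
case: insubP => [i il ie|il]; case: insubP => [i' il' ie'|il'] //=.
- move/(congr1 val) => /= /val_inj /perm_inj e.
  by apply: val_inj; rewrite -ie -ie' e.
- by move=> e; move: il'; rewrite -e /= ltn_ord.
- by move=> e; move: il; rewrite e /= ltn_ord.
Qed.

Definition liftp {n k : nat} (hkn : (k <= n)%N) (π : 'S_k) : 'S_n := perm (@liftf_inj n k hkn π).

Lemma liftpE (n k : nat) (hkn : (k <= n)%N) (π : 'S_k) (i : 'I_k) :
  liftp hkn π (widen_ord hkn i) = widen_ord hkn (π i).
Proof. by rewrite /liftp permE /liftf /= valK. Qed.

Lemma liftpVE (n k : nat) (hkn : (k <= n)%N) (π : 'S_k) (i : 'I_k) :
  (liftp hkn π)^-1%g (widen_ord hkn i) = widen_ord hkn ((π^-1)%g i).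
Proof. by rewrite -{1}(permKV π i) -liftpE permK. Qed.

Lemma comb (R : comRingType) (V : lmodType R) (n k : nat) (hkn : (k <= n)%N) (T : Type)
  (rho : 'S_n -> T) (Z : T -> 'I_k -> V) (h : 'I_n -> R) :
  (forall s1 s2 : 'S_n, keyeq (fun i => s1 (widen_ord hkn i)) (fun i => s2 (widen_ord hkn i)) ->
     rho s1 = rho s2) ->
  (forall j : 'I_k, \sum_(s : 'S_n | incr (fun i => s (widen_ord hkn i))) h (s (widen_ord hkn j)) = 0) ->
  \sum_(s : 'S_n) \sum_i h (s (widen_ord hkn i)) *: Z (rho s) i = 0.
Proof.
move=> hrho hU.
set w := widen_ord hkn.
have inj_s : forall s : 'S_n, injective (fun i => s (w i)).
  by move=> s a b /perm_inj /(congr1 val) /= /val_inj.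
transitivity (\sum_(s : 'S_n) \sum_(π : 'S_k | incr (fun i => s (w (π i))))
    \sum_i h (s (w i)) *: Z (rho s) i).
  apply: eq_bigr => s _.
  have [π0 h0] := sort_exists (inj_s s).
  rewrite (big_pred1 π0) // => π; apply/idP/eqP => [hp|->//].
  exact: (sort_unique (inj_s s) hp h0).
rewrite (exchange_big_dep xpredT) //=.
apply: big1 => π _.
rewrite (reindex_inj (mulgI (liftp hkn π)^-1%g)) /=.
set lp := liftp hkn π.
have e1 : forall (s : 'S_n) (i : 'I_k), (lp^-1 * s)%g (w (π i)) = s (w i).
  by move=> s i; rewrite permM /lp /w -liftpE permK.
have e2 : forall (s : 'S_n) (i : 'I_k), (lp^-1 * s)%g (w i) = s (w ((π^-1)%g i)).
  by move=> s i; rewrite permM /lp /w liftpVE.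
rewrite (eq_bigl (fun s : 'S_n => incr (fun i => s (w i)))); last first.
  by move=> s; rewrite /=; congr incr; apply: funext => i; rewrite e1.
transitivity (\sum_(s : 'S_n | incr (fun i => s (w i)))
   \sum_i h (s (w ((π^-1)%g i))) *: Z (rho (lp^-1 * 1)%g) i).
  apply: eq_bigr => s hs; apply: eq_bigr => i _; rewrite e2; congr (_ *: Z _ _).
  apply: hrho => a b; rewrite !e2 /= !perm1 (incrP hs).
  by [].
rewrite exchange_big /=; apply: big1 => i _.
by rewrite -scaler_suml hU scale0r.
Qed.
Lemma ker_exists (R : fieldType) (n k : nat) (hkn : (k < n)%N) (M : 'M[R]_(n, k)) :
  exists h : 'rV[R]_n, h != 0 /\ h *m M = 0.
Proof.
have hr : (0 < \rank (kermx M))%N.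
  rewrite mxrank_ker subn_gt0; apply: leq_ltn_trans hkn; exact: rank_leq_col.
have : kermx M != 0 by rewrite -mxrank_eq0 -lt0n.
case: (pickP (fun i => row i (kermx M) != 0)) => [i hi _ | none].
  exists (row i (kermx M)); split => //.
  by rewrite -row_mul mulmx_ker row0.
move/negP; elim; apply/eqP/row_matrixP => i; rewrite row0.
by apply/eqP; move/negbFE: (none i).
Qed.

Lemma U_exists (R : fieldType) (n k : nat) (hkn : (k < n)%N) :
  exists h : 'rV[R]_n, h != 0 /\ forall j : 'I_k,
    \sum_(s : 'S_n | incr (fun i => s (widen_ord (ltnW hkn) i))) h 0 (s (widen_ord (ltnW hkn) j)) = 0.
Proof.
pose M : 'M[R]_(n, k) := \matrix_(l, j)
   \sum_(s : 'S_n | incr (fun i => s (widen_ord (ltnW hkn) i))) ((s (widen_ord (ltnW hkn) j) == l)%:R).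
have [h [h0 hM]] := ker_exists hkn M.
exists h; split => // j.
transitivity ((h *m M) 0 j); last by rewrite hM mxE.
rewrite mxE; under [RHS]eq_bigr do rewrite mxE mulr_sumr.
rewrite exchange_big /=; apply: eq_bigr => s _.
rewrite (bigD1 (s (widen_ord (ltnW hkn) j))) //= eqxx mulr1 big1 ?addr0 //.
by move=> l /negbTE; rewrite eq_sym => ->; rewrite mulr0.
Qed.
Lemma hier_geom (R : realFieldType) (n : nat) (K : R) : 1 <= K -> (0 < n)%N ->
  let x := fun l : nat => ((2 * K)^-1) ^+ (n - l) in
  [/\ hier n K x, (forall l, (l.+1 < n)%N -> 2 * K * x l <= x l.+1) & 2 * K * x n.-1 <= 1].
Proof.
move=> K1 n0 x.
have K0 : 0 < K by lra.
have eta0 : 0 < (2 * K)^-1 by rewrite invr_gt0; lra.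
have hK : 2 * K * (2 * K)^-1 = 1 by rewrite mulfV //; lra.
have xpos : forall l, 0 < x l by move=> l; rewrite /x exprn_gt0.
have step : forall l, (l.+1 < n)%N -> 2 * K * x l = x l.+1.
  by move=> l hl; rewrite /x -(subnSK (ltnW hl)) exprS mulrA hK mul1r.
have top : 2 * K * x n.-1 = 1.
  by rewrite /x; case: n n0 {x xpos step} => // n' _ /=; rewrite subSnn expr1.
split.
- split; first exact: xpos.
  split.
  + move=> l hl; have := step l hl; rewrite -mulrA.
    have : 0 < K * x l by rewrite mulr_gt0.
    lra.
  + move: top; rewrite -mulrA; have : 0 < K * x n.-1 by rewrite mulr_gt0.
    lra.
- by move=> l hl; rewrite step.
- by rewrite top.
Qed.

Lemma hier_pert (R : realFieldType) (n : nat) (K : R) (x e : nat -> R) : (0 < n)%N -> 1 <= K ->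
  hier n K x -> (forall l, (l.+1 < n)%N -> 2 * K * x l <= x l.+1) -> 2 * K * x n.-1 <= 1 ->
  (forall l, (l < n)%N -> `|e l| <= x 0%N / 4) ->
  hier n K (fun l => x l + e l).
Proof.
move=> n0 K1 H s2 t2 he.
have [x0 _] := H.
have xge : forall l, (l < n)%N -> x 0%N <= x l.
  move=> [|l] hl //; have := hier_chain K1 H (ltn0Sn l) hl.
  have : x 0%N <= K * x 0%N by rewrite ler_peMl //; lra.
  lra.
have eb : forall l, (l < n)%N -> - (x 0%N / 4) <= e l <= x 0%N / 4.
  by move=> l hl; rewrite -ler_norml he.
split.
- have := eb 0%N n0; lra.
split.
- move=> l hl.
  have := eb l (ltnW hl); have := eb l.+1 hl; have := s2 l hl; have := xge l (ltnW hl).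
  have := xge l.+1 hl.
  move=> h1 h2 h3 h4 h5.
  have : K * e l <= K * (x 0%N / 4) by rewrite ler_wpM2l //; lra.
  have : K * x 0%N <= K * x l by rewrite ler_wpM2l //; lra.
  lra.
- have hn : (n.-1 < n)%N by rewrite ltn_predL.
  have := eb n.-1 hn; have := xge n.-1 hn.
  move=> h1 h2.
  have : K * e n.-1 <= K * (x 0%N / 4) by rewrite ler_wpM2l //; lra.
  have : K * x 0%N <= K * x n.-1 by rewrite ler_wpM2l //; lra.
  lra.
Qed.

Lemma hier_unit (R : realFieldType) (n : nat) (K : R) (x : nat -> R) : 1 <= K ->
  hier n K x -> forall l, (l < n)%N -> 0 <= x l <= 1.
Proof.
move=> K1 H l hl; have := hier_pos K1 H hl; have := hier_top K1 H hl.
have hn : (n.-1 < n)%N by rewrite ltn_predL (leq_ltn_trans (leq0n l) hl).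
have [_ [_ ht]] := H; have := hier_pos K1 H hn.
move=> h1 h2 h3.
have : x n.-1 <= K * x n.-1 by rewrite ler_peMl //; lra.
lra.
Qed.

Unset Implicit Arguments.

Theorem theorem3p1 (R : realType) (d k m n : nat)
    (hd : (1 <= d)%N) (hk : (1 <= k)%N) (hm : (1 <= m)%N) (hkn : (k < n)%N)
    (C : set 'rV[R]_d)
    (hC : exists a b : 'rV[R]_d, a != b /\
          forall t : R, 0 <= t <= 1 -> C ((1 - t) *: a + t *: b))
    (f : 'rV[R]_(k * d) -> 'rV[R]_m) (hf : CPwL f) :
  exists W W' : 'M[R]_(n, d),
    (forall i, C (row i W)) /\ (forall i, C (row i W')) /\
    ~~ perm_eq (rows_seq W) (rows_seq W') /\
    janossy (ltnW hkn) f W = janossy (ltnW hkn) f W'.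
Proof.
have [a0 [b0 [ab hseg]]] := hC.
have [_ [p [P [[hpoly _ hcov _] haff]]]] := hf.
have hA : forall i : 'I_p, exists q : 'M[R]_(k * d, m) * 'rV[R]_m,
    forall y, P i y -> f y = y *m q.1 + q.2.
  by move=> i; have [A [c hc]] := haff i; exists (A, c).
have [fa hfa] := choice hA.
have hK : forall i : 'I_p, exists K0 : R, forall K, 1 <= K -> K0 <= K ->
  forall (x x' : nat -> R) (ι ι' : 'I_k -> 'I_n), hier n K x -> hier n K x' ->
  injective ι -> keyeq ι ι' ->
  (P i (Ypt a0 b0 (fun i => x (ι i))) <-> P i (Ypt a0 b0 (fun i => x' (ι' i)))).
  by move=> i; exact: poly_inv.
have [Kf hKf] := choice hK.
pose K : R := 1 + \sum_i `|Kf i|.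
have K1 : 1 <= K by rewrite lerDl sumr_ge0.
have KK : forall i, Kf i <= K.
  move=> i; apply: le_trans (ler_norm (Kf i)) _.
  rewrite /K (bigD1 i) //=.
  have : 0 <= \sum_(j | j != i) `|Kf j| by apply: sumr_ge0.
  lra.
have cov : forall y, exists i, P i y.
  move=> y; have : [set: 'rV[R]_(k * d)] y by [].
  by rewrite -hcov => -[i _ hi]; exists i.
have [j0 _] := cov 0.
have [h [h0 hU]] := U_exists R hkn.
set w := widen_ord (ltnW hkn).
have n0 : (0 < n)%N := leq_ltn_trans (leq0n k) hkn.
have [Hx Hs2 Ht2] := hier_geom K1 n0.
set x := fun l : nat => (2 * K)^-1 ^+ (n - l) in Hx Hs2 Ht2.
pose hv (l : nat) : R := if @insub _ (fun q => (q < n)%N) 'I_n l is Some i then h 0 i else 0.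
have hvE : forall i : 'I_n, hv i = h 0 i by move=> i; rewrite /hv valK.
pose δ := x 0%N / 4.
pose Hs := 1 + \sum_i `|h 0 i|.
have hsum0 : 0 <= \sum_i `|h 0 i| by apply: sumr_ge0.
have Hs0 : 0 < Hs by rewrite /Hs; lra.
have hHs : forall i, `|h 0 i| <= Hs.
  move=> i; rewrite /Hs (bigD1 i) //=.
  have : 0 <= \sum_(j | j != i) `|h 0 j| by apply: sumr_ge0.
  lra.
pose t0 := δ / Hs.
pose xp (τ : R) := fun l => x l + τ * hv l.
have Hp : forall τ, `|τ| <= t0 -> hier n K (xp τ).
  move=> τ hτ; apply: hier_pert => // l hl.
  have -> : hv l = h 0 (Ordinal hl) by rewrite -(hvE (Ordinal hl)).
  rewrite normrM.
  have : `|τ| * `|h 0 (Ordinal hl)| <= t0 * Hs.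
    by apply: ler_pM => //; apply: hHs.
  by rewrite /t0 /δ mulfVK //; apply/lt0r_neq0.
pose W (y : nat -> R) : 'M[R]_(n, d) :=
  \matrix_(l < n, j < d) ((1 - y (val l)) * a0 0 j + y (val l) * b0 0 j).
have rowW : forall y (l : 'I_n), row l (W y) = (1 - y l) *: a0 + y l *: b0.
  by move=> y l; apply/rowP => j; rewrite !mxE.
have inC : forall y, hier n K y -> forall l, C (row l (W y)).
  by move=> y Hy l; rewrite rowW; apply: hseg; apply: (hier_unit K1 Hy).
have janE : forall y, janossy (ltnW hkn) f (W y) =
    ((n - k)`!%:R)^-1 *: \sum_(s : 'S_n) f (Ypt a0 b0 (fun q => y (s (w q)))).
  move=> y; rewrite /janossy; congr (_ *: _); apply: eq_bigr => s _; congr f.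
  by rewrite /Ypt; congr mxvec; apply/matrixP => i j; rewrite !mxE.
pose ρ (s : 'S_n) : 'I_p :=
  odflt j0 [pick i | `[< P i (Ypt a0 b0 (fun q => x (s (w q)))) >] ].
have ρP : forall s, P (ρ s) (Ypt a0 b0 (fun q => x (s (w q)))).
  move=> s; rewrite /ρ; case: pickP => [i /asboolP //| none].
  have [i hi] := cov (Ypt a0 b0 (fun q => x (s (w q)))).
  by move: (none i); rewrite asboolT.
have inj_s : forall s : 'S_n, injective (fun q => s (w q)).
  by move=> s a b /perm_inj /(congr1 val) /= /val_inj.
have ρkey : forall s1 s2 : 'S_n, keyeq (fun q => s1 (w q)) (fun q => s2 (w q)) -> ρ s1 = ρ s2.
  move=> s1 s2 hke; rewrite /ρ; congr odflt; apply: eq_pick => i; apply: asbool_equiv_eq.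
  exact: (hKf i K K1 (KK i) x x _ _ Hx Hx (inj_s s1) hke).
have eqJ : forall τ, `|τ| <= t0 ->
    janossy (ltnW hkn) f (W x) = janossy (ltnW hkn) f (W (xp τ)).
  move=> τ hτ; rewrite !janE; congr (_ *: _); apply/eqP; rewrite -subr_eq0 -sumrB.
  have Hx' := Hp τ hτ.
  apply/eqP.
  transitivity (\sum_(s : 'S_n) (- τ) *:
     \sum_i h 0 (s (w i)) *: (Ebas a0 b0 i *m (fa (ρ s)).1)).
    apply: eq_bigr => s _.
    have m1 := ρP s.
    have m2 : P (ρ s) (Ypt a0 b0 (fun q => xp τ (s (w q)))).
      by apply/(hKf (ρ s) K K1 (KK _) x (xp τ) _ _ Hx Hx' (inj_s s) (fun _ _ => erefl)).
    rewrite (hfa _ _ m1) (hfa _ _ m2) opprD addrACA subrr addr0 -mulmxBl.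
    rewrite (Yaff a0 b0 (fun q => x (s (w q)))) (Yaff a0 b0 (fun q => xp τ (s (w q)))).
    rewrite opprD addrACA subrr add0r -sumrB mulmx_suml scaler_sumr.
    apply: eq_bigr => i _; rewrite -scalerBl -scalemxAl scalerA /xp hvE.
    congr (_ *: _); ring.
  rewrite -scaler_sumr.
  rewrite (@comb R 'rV[R]_m n k (ltnW hkn) _ ρ (fun j i => Ebas a0 b0 i *m (fa j).1)
     (fun l => h 0 l) ρkey hU).
  by rewrite scaler0.
have [jv hjv] : exists jv, b0 0 jv - a0 0 jv != 0.
  case: (pickP (fun jv => b0 0 jv - a0 0 jv != 0)) => [jv hj|none]; first by exists jv.
  exfalso; move/eqP: ab; apply; apply/rowP => jv.
  by move/negbFE: (none jv); rewrite subr_eq0 => /eqP ->.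
pose ψ (r : 'rV[R]_d) := (r 0 jv - a0 0 jv) / (b0 0 jv - a0 0 jv).
have ψW : forall y (l : 'I_n), ψ (row l (W y)) = y l.
  by move=> y l; rewrite rowW /ψ !mxE; field.
have sumsq : forall y y', perm_eq (rows_seq (W y)) (rows_seq (W y')) ->
    \sum_(l < n) y l ^+ 2 = \sum_(l < n) y' l ^+ 2.
  move=> y y' hp.
  have := perm_big _ hp (op := +%R) (x := 0) (P := xpredT) (F := fun r => ψ r ^+ 2).
  rewrite /rows_seq !big_map.
  rewrite (eq_bigr (fun j : 'I_n => y j ^+ 2)); last by move=> j _; rewrite ψW.
  rewrite [X in _ = X -> _](eq_bigr (fun j : 'I_n => y' j ^+ 2)); last by move=> j _; rewrite ψW.
  by rewrite [index_enum _]unlock.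
have t0p : 0 < t0 by rewrite /t0 /δ divr_gt0 // divr_gt0 //; case: Hx.
have E : forall τ, \sum_(l < n) xp τ l ^+ 2 = \sum_(l < n) x l ^+ 2 +
    τ * \sum_(l < n) 2 * (x l * hv l) + τ ^+ 2 * \sum_(l < n) hv l ^+ 2.
  move=> τ; rewrite !mulr_sumr -!big_split /=; apply: eq_bigr => l _; rewrite /xp; ring.
case: (boolP (perm_eq (rows_seq (W x)) (rows_seq (W (xp t0))))) => hp1; last first.
  exists (W x), (W (xp t0)); split; first exact: inC.
  split; first by apply: inC; apply: Hp; rewrite ger0_norm // ltW.
  by split => //; apply: eqJ; rewrite ger0_norm // ltW.
case: (boolP (perm_eq (rows_seq (W x)) (rows_seq (W (xp (t0 / 2)))))) => hp2; last first.
  have ht : `|t0 / 2| <= t0.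
    move: t0p; move: (t0) => u hu; rewrite ger0_norm; lra.
  exists (W x), (W (xp (t0 / 2))); split; first exact: inC.
  split; first by apply: inC; apply: Hp.
  by split => //; apply: eqJ.
exfalso; move/negP: h0; apply.
have e1 := sumsq _ _ hp1; have e2 := sumsq _ _ hp2.
rewrite E in e1; rewrite E in e2.
set A := \sum_(l < n) 2 * (x l * hv l) in e1 e2.
set B := \sum_(l < n) hv l ^+ 2 in e1 e2.
have f1 : t0 * A + t0 ^+ 2 * B = 0 by lra.
have f2 : (t0 * A) / 2 + (t0 ^+ 2 * B) / 4 = 0.
  rewrite -[RHS](_ : t0 / 2 * A + (t0 / 2) ^+ 2 * B = 0); first by field.
  lra.
have : t0 ^+ 2 * B = 0 by lra.
move/eqP; rewrite mulf_eq0 expf_eq0 /= (gt_eqF t0p) /= => /eqP B0.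
have hz : forall l : 'I_n, hv l ^+ 2 = 0.
  by move=> l; apply: (psumr_eq0P _ B0) => // i _; rewrite sqr_ge0.
apply/eqP/rowP => l; rewrite mxE -hvE; apply/eqP.
by move: (hz l) => /eqP; rewrite expf_eq0.
Qed.
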